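(* In the setting of the context, fix $n\in\{0,1,\dots,T/\tau-1\}$ and suppose the MTI-FA iterates satisfy $|y^n|\le C_0+1$ and $|\dot y^n|\le (C_0+1)/\varepsilon^2$. Let $\tilde y^n$ solve $\varepsilon^2\ddot{\tilde y}^n(s)+(\alpha+\varepsilon^{-2})\tilde y^n(s)+g(|\tilde y^n(s)|^2)\tilde y^n(s)=0$ for $s>0$, $\tilde y^n(0)=y^n$, $\dot{\tilde y}^n(0)=\dot y^n$, and set $\eta^n(s)=y(t_n+s)-\tilde y^n(s)$, $\dot\eta^n(s)=\dot y(t_n+s)-\dot{\tilde y}^n(s)$, $e^n=y(t_n)-y^n$, $\dot e^n=\dot y(t_n)-\dot y^n$. Then $$\mathcal E(\eta^n(\tau),\dot\eta^n(\tau))-\mathcal E(e^n,\dot e^n)\lesssim\tau\,\mathcal E(e^n,\dot e^n),\qquad 0\le\tau\le\tau_1,$$ where $\tau_1=(2C_0+4)^{-1}K_1^{-1}$ with $K_1=\|g\|_{L^\infty(0,(2C_0+4)^2)}$, and $\mathcal E(e,\dot e)=\varepsilon^2|\dot e|^2+(\alpha+\varepsilon^{-2})|e|^2$ for $e,\dot e\in\mathbb{C}$.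
   Context: Setting. Let $0<\varepsilon\le1$, $\alpha\ge0$, $\lambda\in\mathbb{R}$, $p\in\mathbb{N}_0=\{0,1,2,\dots\}$, $g(\rho)=\lambda\rho^p$ and $f(y)=g(|y|^2)y$ for $y\in\mathbb{C}$. Let $\phi_1,\phi_2\in\mathbb{C}$ (independent of $\varepsilon$) and let $y(t)\in\mathbb{C}$ solve $\varepsilon^2\ddot y+(\alpha+\varepsilon^{-2})y+f(y)=0$ for $t>0$, $y(0)=\phi_1$, $\dot y(0)=\phi_2/\varepsilon^2$. Let $T^*$ be the maximal existence time, fix $0<T<T^*$, and assume $y\in C^2(0,T)$ with $\|\frac{d^m}{dt^m}y\|_{L^\infty(0,T)}\lesssim\varepsilon^{-2m}$ for $m=0,1,2$. Set $C_0=\max\{\|y\|_{L^\infty(0,T)},\varepsilon^2\|\dot y\|_{L^\infty(0,T)},\varepsilon^4\|\ddot y\|_{L^\infty(0,T)}\}$. $A\lesssim B$ means $|A|\le CB$ for a generic constant $C>0$ independent of $\tau$ (or $n$) and $\varepsilon$. $\tau>0$ is the time step, $t_n=n\tau$, $\bar z$ denotes complex conjugation, $\omega=\sqrt{1+\varepsilon^2\alpha}/\varepsilon^2$. The iterates $(y^n,\dot y^n)$ are those of the scheme MTI-FA: For $k=0,\dots,p$ let $\langle p_1,p_2,p_3\rangle_k$ be the set of $(p_1,p_2,p_3)\in\mathbb{N}_0^3$ with $p_1+2p_2+p_3=p-k$, $p_3\in\{0,1\}$; $g_\pm(\rho_+,\rho_-)=\sum_{\langle p_1,p_2,p_3\rangle_0}\lambda(\rho_++\rho_-)^{p_1}(\rho_+\rho_-)^{p_2}(\rho_\mp)^{p_3}$;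 for $k=1,\dots,p$, $g_k(z_+,z_-)=\lambda z_+^{k+1}z_-^{k}\sum_{\langle p_1,p_2,p_3\rangle_k}(|z_+|^2+|z_-|^2)^{p_1}|z_+|^{2p_2}|z_-|^{2p_2+2p_3}$, $P_k=\int_0^\tau\frac{\sin(\omega(\tau-\theta))}{\varepsilon^2\omega}e^{i(2k+1)\theta/\varepsilon^2}d\theta$, $Q_k=\int_0^\tau\frac{\sin(\omega(\tau-\theta))}{\varepsilon^2\omega}e^{i(2k+1)\theta/\varepsilon^2}\theta\,d\theta$, $\dot P_k=\int_0^\tau\frac{\cos(\omega(\tau-\theta))}{\varepsilon^2}e^{i(2k+1)\theta/\varepsilon^2}d\theta$, $\dot Q_k=\int_0^\tau\frac{\cos(\omega(\tau-\theta))}{\varepsilon^2}e^{i(2k+1)\theta/\varepsilon^2}\theta\,d\theta$ (empty sums if $p=0$). Set $y^0=\phi_1$, $\dot y^0=\phi_2/\varepsilon^2$; given $(y^n,\dot y^n)$ let $z_+^{(0)}=\frac{y^n-i\varepsilon^2\dot y^n}{2}$, $z_-^{(0)}=\frac{\overline{y^n}-i\varepsilon^2\overline{\dot y^n}}{2}$, $\mu_\pm=\frac12g_\pm(|z_+^{(0)}|^2,|z_-^{(0)}|^2)+\frac\alpha2$, $\dot z_\pm^{(0)}=i\mu_\pm z_\pm^{(0)}$, $\dot r^{(0)}=-\dot z_+^{(0)}-\overline{\dot z_-^{(0)}}$, $u^{(0)}=-\mu_+^2z_+^{(0)}-\mu_-^2\overline{z_-^{(0)}}$, $g_{k,\pm}^{(0)}=g_k(z_\pm^{(0)},z_\mp^{(0)})$,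 $\dot g_{k,\pm}^{(0)}=\frac{d}{ds}g_k(Z_\pm(s),Z_\mp(s))|_{s=0}$ with $Z_\pm(s)=e^{i\mu_\pm s}z_\pm^{(0)}$; $z_\pm^{n+1}=e^{i\mu_\pm\tau}z_\pm^{(0)}$, $\dot z_\pm^{n+1}=i\mu_\pm z_\pm^{n+1}$, $\ddot z_\pm^{n+1}=-\mu_\pm^2z_\pm^{n+1}$, $r^{n+1}=\frac{\sin(\omega\tau)}{\omega}(\dot r^{(0)}-\frac\tau2u^{(0)})-\sum_{k=1}^p[P_kg_{k,+}^{(0)}+Q_k\dot g_{k,+}^{(0)}+\overline{P_kg_{k,-}^{(0)}}+\overline{Q_k\dot g_{k,-}^{(0)}}]$, $y^{n+1}=e^{i\tau/\varepsilon^2}z_+^{n+1}+e^{-i\tau/\varepsilon^2}\overline{z_-^{n+1}}+r^{n+1}$, $u^{n+1}=e^{i\tau/\varepsilon^2}\ddot z_+^{n+1}+e^{-i\tau/\varepsilon^2}\overline{\ddot z_-^{n+1}}$, $h^{n+1}=g(|y^{n+1}|^2)y^{n+1}-g(|y^{n+1}-r^{n+1}|^2)(y^{n+1}-r^{n+1})$, $\dot r^{n+1}=-\sum_{k=1}^p[\dot P_kg_{k,+}^{(0)}+\dot Q_k\dot g_{k,+}^{(0)}+\overline{\dot P_kg_{k,-}^{(0)}}+\overline{\dot Q_k\dot g_{k,-}^{(0)}}]+\cos(\omega\tau)(\dot r^{(0)}-\frac\tau2u^{(0)})-\frac\tau2(\frac{h^{n+1}}{\varepsilon^2}+u^{n+1})$,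 $\dot y^{n+1}=e^{i\tau/\varepsilon^2}(\dot z_+^{n+1}+\frac{i}{\varepsilon^2}z_+^{n+1})+e^{-i\tau/\varepsilon^2}(\overline{\dot z_-^{n+1}}-\frac{i}{\varepsilon^2}\overline{z_-^{n+1}})+\dot r^{n+1}$. *)

(* Defs.v *)
From Stdlib Require Import Reals.
From Coquelicot Require Import Coquelicot.

Open Scope R_scope.

Definition gfun (lam : R) (p : nat) (rho : R) : R := lam * rho ^ p.
Definition ffun (lam : R) (p : nat) (y : C) : C :=
  (RtoC (gfun lam p (Cmod y ^ 2)) * y)%C.

Definition expi (t : R) : C := (cos t, sin t).

Fixpoint Cpow (z : C) (n : nat) : C :=
  match n with O => RtoC 1 | S m => (z * Cpow z m)%C end.

Fixpoint Csum1 (F : nat -> C) (p : nat) : C :=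
  match p with O => RtoC 0 | S q => (Csum1 F q + F (S q))%C end.

(** Sum over the index set <p1,p2,p3>_m = {(p1,p2,p3) in N^3 : p1+2p2+p3 = m, p3 in {0,1}}.
    (p1, p2 <= m automatically.) *)
Definition sum_triples (m : nat) (F : nat -> nat -> nat -> R) : R :=
  sum_f_R0 (fun p1 => sum_f_R0 (fun p2 => sum_f_R0 (fun p3 =>
    if Nat.eqb (p1 + 2 * p2 + p3) m then F p1 p2 p3 else 0) 1) m) m.

(** g_+ (sel = true) and g_- (sel = false):
    sum_{<p1,p2,p3>_0} lam (rho_+ + rho_-)^p1 (rho_+ rho_-)^p2 (rho_-+)^p3,
    where rho_-+ is rho_- for g_+ and rho_+ for g_-. *)
Definition gpm (lam : R) (p : nat) (sel : bool) (rp rm : R) : R :=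
  sum_triples p (fun p1 p2 p3 =>
    lam * (rp + rm) ^ p1 * (rp * rm) ^ p2 * (if sel then rm else rp) ^ p3).

Definition gk (lam : R) (p k : nat) (zp zm : C) : C :=
  (RtoC lam * Cpow zp (S k) * Cpow zm k *
   RtoC (sum_triples (p - k) (fun p1 p2 p3 =>
     ((Cmod zp ^ 2 + Cmod zm ^ 2) ^ p1 * Cmod zp ^ (2 * p2) * Cmod zm ^ (2 * p2 + 2 * p3))%R)))%C.

Definition CDerive (F : R -> C) (s : R) : C :=
  (Derive (fun t => fst (F t)) s, Derive (fun t => snd (F t)) s).
Definition CRInt (F : R -> C) (a b : R) : C :=
  (RInt (fun t => fst (F t)) a b, RInt (fun t => snd (F t)) a b).

Definition omega (eps alpha : R) : R := sqrt (1 + eps ^ 2 * alpha) / eps ^ 2.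

Definition Pk (eps alpha tau : R) (k : nat) : C :=
  CRInt (fun th => (RtoC (sin (omega eps alpha * (tau - th)) / (eps ^ 2 * omega eps alpha))%R
                    * expi (INR (2 * k + 1) * th / eps ^ 2)%R)%C) 0 tau.
Definition Qk (eps alpha tau : R) (k : nat) : C :=
  CRInt (fun th => (RtoC (sin (omega eps alpha * (tau - th)) / (eps ^ 2 * omega eps alpha))%R
                    * expi (INR (2 * k + 1) * th / eps ^ 2)%R * RtoC th)%C) 0 tau.
Definition dPk (eps alpha tau : R) (k : nat) : C :=
  CRInt (fun th => (RtoC (cos (omega eps alpha * (tau - th)) / eps ^ 2)%R
                    * expi (INR (2 * k + 1) * th / eps ^ 2)%R)%C) 0 tau.
Definition dQk (eps alpha tau : R) (k : nat) : C :=
  CRInt (fun th => (RtoC (cos (omega eps alpha * (tau - th)) / eps ^ 2)%R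
                    * expi (INR (2 * k + 1) * th / eps ^ 2)%R * RtoC th)%C) 0 tau.

Definition mti_step (eps alpha lam : R) (p : nat) (tau : R) (yd : C * C) : C * C :=
  let (yn, dyn) := yd in
  let e2 := eps ^ 2 in
  let zp0 := ((yn - Ci * RtoC e2 * dyn) / RtoC 2)%C in
  let zm0 := ((Cconj yn - Ci * RtoC e2 * Cconj dyn) / RtoC 2)%C in
  let mup := / 2 * gpm lam p true (Cmod zp0 ^ 2) (Cmod zm0 ^ 2) + alpha / 2 in
  let mum := / 2 * gpm lam p false (Cmod zp0 ^ 2) (Cmod zm0 ^ 2) + alpha / 2 in
  let dzp0 := (Ci * RtoC mup * zp0)%C in
  let dzm0 := (Ci * RtoC mum * zm0)%C in
  let dr0 := (- dzp0 - Cconj dzm0)%C in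
  let u0 := (- RtoC (mup ^ 2) * zp0 - RtoC (mum ^ 2) * Cconj zm0)%C in
  let gkp k := gk lam p k zp0 zm0 in
  let gkm k := gk lam p k zm0 zp0 in
  let Zp s := (expi (mup * s) * zp0)%C in
  let Zm s := (expi (mum * s) * zm0)%C in
  let dgkp k := CDerive (fun s => gk lam p k (Zp s) (Zm s)) 0 in
  let dgkm k := CDerive (fun s => gk lam p k (Zm s) (Zp s)) 0 in
  let zp1 := (expi (mup * tau) * zp0)%C in
  let zm1 := (expi (mum * tau) * zm0)%C in
  let dzp1 := (Ci * RtoC mup * zp1)%C in
  let dzm1 := (Ci * RtoC mum * zm1)%C in
  let ddzp1 := (- RtoC (mup ^ 2) * zp1)%C in
  let ddzm1 := (- RtoC (mum ^ 2) * zm1)%C in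
  let w := omega eps alpha in
  let r1 := (RtoC (sin (w * tau) / w) * (dr0 - RtoC (tau / 2) * u0)
             - Csum1 (fun k => Pk eps alpha tau k * gkp k + Qk eps alpha tau k * dgkp k
                               + Cconj (Pk eps alpha tau k * gkm k)
                               + Cconj (Qk eps alpha tau k * dgkm k)) p)%C in
  let y1 := (expi (tau / e2) * zp1 + expi (- (tau / e2)) * Cconj zm1 + r1)%C in
  let u1 := (expi (tau / e2) * ddzp1 + expi (- (tau / e2)) * Cconj ddzm1)%C in
  let h1 := (ffun lam p y1 - ffun lam p (y1 - r1))%C in
  let dr1 := (- Csum1 (fun k => dPk eps alpha tau k * gkp k + dQk eps alpha tau k * dgkp k
                                 + Cconj (dPk eps alpha tau k * gkm k)
                                 + Cconj (dQk eps alpha tau k * dgkm k)) p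
              + RtoC (cos (w * tau)) * (dr0 - RtoC (tau / 2) * u0)
              - RtoC (tau / 2) * (h1 / RtoC e2 + u1))%C in
  let dy1 := (expi (tau / e2) * (dzp1 + Ci / RtoC e2 * zp1)
              + expi (- (tau / e2)) * (Cconj dzm1 - Ci / RtoC e2 * Cconj zm1) + dr1)%C in
  (y1, dy1).

Definition mti_iter (eps alpha lam : R) (p : nat) (tau : R) (phi1 phi2 : C) (n : nat) : C * C :=
  Nat.iter n (mti_step eps alpha lam p tau) (phi1, (phi2 / RtoC (eps ^ 2))%C).

Definition is_sol (eps alpha lam : R) (p : nat) (a b : R) (u du ddu : R -> C) (u0 du0 : C) : Prop :=
  u a = u0 /\ du a = du0 /\
  (forall t, a < t < b ->
     is_derive u t (du t) /\ is_derive du t (ddu t) /\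
     (RtoC (eps ^ 2) * ddu t + RtoC (alpha + / eps ^ 2) * u t + ffun lam p (u t))%C = RtoC 0) /\
  (forall t, a <= t <= b ->
     filterlim u (within (fun s => a <= s <= b) (locally t)) (locally (u t)) /\
     filterlim du (within (fun s => a <= s <= b) (locally t)) (locally (du t))).

(** Supremum over an open interval (a,b) of a real function (finite for bounded functions). *)
Definition sup_on (a b : R) (F : R -> R) : R :=
  real (Lub_Rbar (fun x => exists t, a < t < b /\ x = F t)).

Definition C0def (eps T : R) (y dy ddy : R -> C) : R :=
  Rmax (sup_on 0 T (fun t => Cmod (y t)))
       (Rmax (eps ^ 2 * sup_on 0 T (fun t => Cmod (dy t)))
             (eps ^ 4 * sup_on 0 T (fun t => Cmod (ddy t)))).

(** K_1 = ||g||_{L^inf(0,(2C_0+4)^2)} (g is continuous, so ess sup = sup). *)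
Definition K1def (lam : R) (p : nat) (C0 : R) : R :=
  sup_on 0 ((2 * C0 + 4) ^ 2) (fun rho => Rabs (gfun lam p rho)).

Definition Energy (eps alpha : R) (e de : C) : R :=
  eps ^ 2 * Cmod de ^ 2 + (alpha + / eps ^ 2) * Cmod e ^ 2.

(* Main.v *)
Require Import Defs.
From Stdlib Require Import Reals Lra Psatz Classical.
From Coquelicot Require Import Coquelicot.
Open Scope R_scope.

Lemma is_derive_fstC (u : R -> C) t l :
  is_derive u t l -> is_derive (fun s => fst (u s)) t (fst l).
Proof.
  intro H. unfold is_derive in *.
  apply (filterdiff_comp' u (fun z : C_R_NormedModule => fst z) t (fun y => scal y l) (fun z => fst z)) in H.
  - eapply filterdiff_ext_lin. exact H. intros y. reflexivity.
  - apply filterdiff_linear. apply is_linear_fst.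
Qed.

Lemma is_derive_sndC (u : R -> C) t l :
  is_derive u t l -> is_derive (fun s => snd (u s)) t (snd l).
Proof.
  intro H. unfold is_derive in *.
  apply (filterdiff_comp' u (fun z : C_R_NormedModule => snd z) t (fun y => scal y l) (fun z => snd z)) in H.
  - eapply filterdiff_ext_lin. exact H. intros y. reflexivity.
  - apply filterdiff_linear. apply is_linear_snd.
Qed.

Lemma lim_fstC (F : (R -> Prop) -> Prop) (u : R -> C) z :
  filterlim u F (locally z) -> filterlim (fun s => fst (u s)) F (locally (fst z)).
Proof.
  intro H. eapply filterlim_comp. exact H.
  intros P [e He]. exists e. intros [a b] [H1 H2]. apply He. exact H1.
Qed.

Lemma lim_sndC (F : (R -> Prop) -> Prop) (u : R -> C) z :
  filterlim u F (locally z) -> filterlim (fun s => snd (u s)) F (locally (snd z)).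
Proof.
  intro H. eapply filterlim_comp. exact H.
  intros P [e He]. exists e. intros [a b] [H1 H2]. apply He. exact H2.
Qed.

Section CW.
Context (F : (R -> Prop) -> Prop) (FF : Filter F).
Lemma limR_plus f g a b : filterlim f F (locally a) -> filterlim g F (locally b) ->
  filterlim (fun s => f s + g s) F (locally (a + b)).
Proof. intros Hf Hg. eapply filterlim_comp_2; eauto. apply (filterlim_plus (K:=R_AbsRing) a b). Qed.
Lemma limR_mult f g a b : filterlim f F (locally a) -> filterlim g F (locally b) ->
  filterlim (fun s => f s * g s) F (locally (a * b)).
Proof. intros Hf Hg. eapply filterlim_comp_2; eauto. apply (filterlim_mult (K:=R_AbsRing) a b). Qed.
Lemma limR_const (a : R) : filterlim (fun _ => a) F (locally a).
Proof. apply filterlim_const. Qed.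
End CW.

Lemma Cmod_sq z : Cmod z ^ 2 = fst z ^ 2 + snd z ^ 2.
Proof. unfold Cmod. rewrite pow2_sqrt; [lra|]. nra. Qed.

Definition clamp (a b s : R) := Rmax a (Rmin b s).

Lemma clamp_in a b s : a <= b -> a <= clamp a b s <= b.
Proof. intros. unfold clamp, Rmax, Rmin. repeat destruct Rle_dec; lra. Qed.
Lemma clamp_id a b s : a <= s <= b -> clamp a b s = s.
Proof. intros. unfold clamp, Rmax, Rmin. repeat destruct Rle_dec; lra. Qed.
Lemma clamp_lip a b s x : a <= x <= b -> Rabs (clamp a b s - x) <= Rabs (s - x).
Proof. intros. unfold clamp, Rmax, Rmin. repeat destruct Rle_dec;
  unfold Rabs; repeat destruct Rcase_abs; lra. Qed.

Lemma nonincr (h dh : R -> R) (a b : R) :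
  a <= b ->
  (forall x, a < x < b -> is_derive h x (dh x) /\ dh x <= 0) ->
  (forall x, a <= x <= b -> filterlim h (within (fun s => a <= s <= b) (locally x)) (locally (h x))) ->
  h b <= h a.
Proof.
  intros Hab Hd Hc.
  set (g := fun s => h (clamp a b s)).
  assert (Hg : forall x, a <= x <= b -> g x = h x).
  { intros. unfold g. rewrite clamp_id; auto. }
  destruct (MVT_gen g a b (fun x => Rmin (dh x) 0)) as [c [Hc1 Hc2]].
  - rewrite Rmin_left, Rmax_right by lra. intros x Hx.
    destruct (Hd x Hx) as [H1 H2]. rewrite Rmin_left by lra.
    apply (is_derive_ext_loc h). 2: exact H1.
    assert (Hp : 0 < Rmin (x - a) (b - x)) by (apply Rmin_pos; lra).
    exists (mkposreal _ Hp). intros y Hy. cbn in Hy. unfold ball in Hy; cbn in Hy.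
    unfold AbsRing_ball, abs, minus, plus, opp in Hy; cbn in Hy.
    symmetry. apply Hg. unfold Rmin in Hy. destruct Rle_dec;
    unfold Rabs in Hy; destruct Rcase_abs; lra.
  - rewrite Rmin_left, Rmax_right by lra. intros x Hx.
    apply continuity_pt_filterlim. unfold g. rewrite (clamp_id a b x Hx).
    eapply filterlim_comp. 2: apply (Hc x Hx).
    intros P [e He]. exists e. intros y Hy. unfold g.
    pose proof (clamp_in a b y Hab). apply He; [|exact H].
    unfold ball in *; cbn in *. unfold AbsRing_ball, abs, minus, plus, opp in *; cbn in *.
    pose proof (clamp_lip a b y x Hx). unfold Rminus in *. lra.
  - rewrite Rmin_left, Rmax_right in Hc1 by lra.
    rewrite !Hg in Hc2 by lra.
    assert (Rmin (dh c) 0 <= 0) by apply Rmin_r. nra.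
Qed.

Lemma is_derive_eqv (f : R -> R) x l l' : is_derive f x l -> l = l' -> is_derive f x l'.
Proof. intros H ->. exact H. Qed.

Lemma is_derive_sq2 (f g : R -> R) x df dg : is_derive f x df -> is_derive g x dg ->
  is_derive (fun s => f s ^ 2 + g s ^ 2) x (2 * (f x * df + g x * dg)).
Proof.
  intros Hf Hg.
  pose proof (is_derive_plus _ _ _ _ _ (is_derive_mult f f x df df Hf Hf Rmult_comm)
     (is_derive_mult g g x dg dg Hg Hg Rmult_comm)) as H.
  eapply is_derive_ext. 2: eapply is_derive_eqv. 2: exact H.
  - intro t. cbv [plus mult]. simpl. ring.
  - cbv [plus mult]. simpl. ring.
Qed.

Lemma is_derive_lin2 (f g : R -> R) x df dg (a b : R) : is_derive f x df -> is_derive g x dg ->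
  is_derive (fun s => a * f s + b * g s) x (a * df + b * dg).
Proof.
  intros Hf Hg.
  pose proof (is_derive_plus _ _ _ _ _ (is_derive_scal f x a df Hf) (is_derive_scal g x b dg Hg)) as H.
  exact H.
Qed.

Lemma is_derive_mulR (f g : R -> R) x df dg : is_derive f x df -> is_derive g x dg ->
  is_derive (fun s => f s * g s) x (df * g x + f x * dg).
Proof. intros Hf Hg. exact (is_derive_mult f g x df dg Hf Hg Rmult_comm). Qed.

Lemma is_derive_expL (L x : R) : is_derive (fun s => exp (-(L*s))) x (- L * exp (-(L*x))).
Proof. auto_derive; auto. ring. Qed.

Lemma limR_sq2 (F : (R -> Prop) -> Prop) (FF : Filter F) f g a b :
  filterlim f F (locally a) -> filterlim g F (locally b) ->
  filterlim (fun s => f s ^ 2 + g s ^ 2) F (locally (a ^ 2 + b ^ 2)).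
Proof.
  intros Hf Hg.
  pose proof (limR_plus F FF _ _ _ _ (limR_mult F FF _ _ _ _ Hf Hf) (limR_mult F FF _ _ _ _ Hg Hg)) as H.
  replace (a ^ 2 + b ^ 2) with (a * a + b * b) by ring.
  eapply filterlim_ext. 2: exact H. intro; simpl; ring.
Qed.

Lemma key_ineq0 (eps c L F1 F2 u1 u2 d1 d2 : R) : 0 < eps -> / eps ^ 2 <= c -> 0 < L ->
  F1 ^ 2 + F2 ^ 2 <= L ^ 2 * (u1 ^ 2 + u2 ^ 2) ->
  2 * (F1 * d1 + F2 * d2) <= L * (eps ^ 2 * (d1 ^ 2 + d2 ^ 2) + c * (u1 ^ 2 + u2 ^ 2)).
Proof.
  intros He Hc HL HF.
  set (t := eps ^ 2 * L).
  assert (Ht : 0 < t) by (unfold t; apply Rmult_lt_0_compat; [apply pow_lt|]; lra).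
  assert (H1 : t * (2 * (F1 * d1 + F2 * d2)) <= t ^ 2 * (d1 ^ 2 + d2 ^ 2) + L ^ 2 * (u1 ^ 2 + u2 ^ 2)).
  { pose proof (pow2_ge_0 (t*d1-F1)); pose proof (pow2_ge_0 (t*d2-F2)). clearbody t. nra. }
  assert (H2 : 2 * (F1 * d1 + F2 * d2) <= t * (d1 ^ 2 + d2 ^ 2) + L ^ 2 * (u1 ^ 2 + u2 ^ 2) / t).
  { apply Rmult_le_reg_l with t; auto. field_simplify; [|lra]. unfold Rdiv. nra. }
  assert (H3 : L ^ 2 * (u1 ^ 2 + u2 ^ 2) / t = L * (u1 ^ 2 + u2 ^ 2) * / eps ^ 2).
  { unfold t. field. repeat split; try (apply pow_nonzero); lra. }
  assert (0 <= u1 ^ 2 + u2 ^ 2) by nra.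
  assert (L * (u1 ^ 2 + u2 ^ 2) * / eps ^ 2 <= L * (u1 ^ 2 + u2 ^ 2) * c).
  { apply Rmult_le_compat_l; nra. }
  unfold t in *. nra.
Qed.

Lemma key_ineq (eps c L F1 F2 u1 u2 d1 d2 : R) : 0 < eps -> / eps ^ 2 <= c -> 0 <= L ->
  F1 ^ 2 + F2 ^ 2 <= L ^ 2 * (u1 ^ 2 + u2 ^ 2) ->
  2 * (F1 * d1 + F2 * d2) <= L * (eps ^ 2 * (d1 ^ 2 + d2 ^ 2) + c * (u1 ^ 2 + u2 ^ 2)).
Proof.
  intros He Hc HL HF. destruct (Req_dec L 0) as [->|Hn].
  - assert (F1 = 0) by nra. assert (F2 = 0) by nra. subst. lra.
  - apply key_ineq0; auto. lra.
Qed.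

Lemma GL (eps alpha L a b : R) (u du ddu : R -> C) :
  0 < eps -> 0 <= alpha -> 0 <= L -> a <= b ->
  (forall t, a < t < b -> is_derive u t (du t) /\ is_derive du t (ddu t) /\
     Cmod (RtoC (eps ^ 2) * ddu t + RtoC (alpha + / eps ^ 2) * u t)%C <= L * Cmod (u t)) ->
  (forall t, a <= t <= b ->
     filterlim u (within (fun s => a <= s <= b) (locally t)) (locally (u t)) /\
     filterlim du (within (fun s => a <= s <= b) (locally t)) (locally (du t))) ->
  Energy eps alpha (u b) (du b) <= exp (L * (b - a)) * Energy eps alpha (u a) (du a).
Proof.
  intros He Ha HL Hab Hd Hc.
  set (c := alpha + / eps ^ 2).
  assert (Hce : / eps ^ 2 <= c) by (unfold c; lra).
  set (E := fun s => eps ^ 2 * (fst (du s) ^ 2 + snd (du s) ^ 2) + c * (fst (u s) ^ 2 + snd (u s) ^ 2)).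
  assert (HE : forall s, Energy eps alpha (u s) (du s) = E s).
  { intro s. unfold Energy, E, c. rewrite !Cmod_sq. ring. }
  set (h := fun s => E s * exp (- (L * s))).
  set (dh := fun s => (2 * eps ^ 2 * (fst (du s) * fst (ddu s) + snd (du s) * snd (ddu s))
                      + 2 * c * (fst (u s) * fst (du s) + snd (u s) * snd (du s)) - L * E s)
                      * exp (- (L * s))).
  assert (Hh : h b <= h a).
  { apply (nonincr h dh a b Hab).
    - intros x Hx. destruct (Hd x Hx) as [H1 [H2 H3]]. split.
      + pose proof (is_derive_sq2 _ _ x _ _ (is_derive_fstC _ _ _ H2) (is_derive_sndC _ _ _ H2)) as D1.
        pose proof (is_derive_sq2 _ _ x _ _ (is_derive_fstC _ _ _ H1) (is_derive_sndC _ _ _ H1)) as D2.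
        pose proof (is_derive_lin2 _ _ x _ _ (eps ^ 2) c D1 D2) as D3.
        pose proof (is_derive_mulR _ _ x _ _ D3 (is_derive_expL L x)) as D4.
        eapply is_derive_eqv. exact D4. unfold dh, E. cbv beta.
        assert (Id : forall e2 c L a1 a2 b1 b2 c1 c2 ee : R,
          (e2 * (2 * (a1 * b1 + a2 * b2)) + c * (2 * (c1 * a1 + c2 * a2))) * ee
          + (e2 * (a1 ^ 2 + a2 ^ 2) + c * (c1 ^ 2 + c2 ^ 2)) * (- L * ee)
          = (2 * e2 * (a1 * b1 + a2 * b2) + 2 * c * (c1 * a1 + c2 * a2)
             - L * (e2 * (a1 ^ 2 + a2 ^ 2) + c * (c1 ^ 2 + c2 ^ 2))) * ee) by (intros; ring).
        apply Id.
      + unfold dh. assert (0 < exp (- (L * x))) by apply exp_pos.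
        assert (Hk : 2 * ((eps ^ 2 * fst (ddu x) + c * fst (u x)) * fst (du x)
                       + (eps ^ 2 * snd (ddu x) + c * snd (u x)) * snd (du x)) <= L * E x).
        { apply key_ineq; auto. 
          assert (Hm : 0 <= Cmod (u x)) by apply Cmod_ge_0.
          assert (Hm2 : 0 <= Cmod (RtoC (eps ^ 2) * ddu x + RtoC c * u x)%C) by apply Cmod_ge_0.
          assert (Hq : Cmod (RtoC (eps ^ 2) * ddu x + RtoC c * u x)%C ^ 2 <= (L * Cmod (u x)) ^ 2).
          { apply pow_incr; auto. }
          rewrite Cmod_sq in Hq. rewrite Rpow_mult_distr, Cmod_sq in Hq.
          destruct (ddu x), (u x). simpl in Hq. simpl. nra. }
        nra.
    - intros x Hx. unfold h.
      assert (FW : Filter (within (fun s => a <= s <= b) (locally x))) by (apply within_filter, locally_filter).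
      apply (limR_mult _ FW).
      + unfold E. destruct (Hc x Hx) as [H1 H2].
        apply (limR_plus _ FW).
        * apply (limR_mult _ FW). apply (limR_const _ FW).
          apply (limR_sq2 _ FW).
          apply lim_fstC; auto. apply lim_sndC; auto.
        * apply (limR_mult _ FW). apply (limR_const _ FW).
          apply (limR_sq2 _ FW).
          apply lim_fstC; auto. apply lim_sndC; auto.
      + eapply filterlim_filter_le_1. apply filter_le_within.
        apply (ex_derive_continuous (K:=R_AbsRing) (V:=R_NormedModule) (fun s => exp (-(L*s))) x). eexists. apply is_derive_expL. }
  rewrite !HE. unfold h in Hh.
  assert (Hx : exp (L * (b - a)) = exp (- (L * a)) * / exp (- (L * b))).
  { rewrite <- exp_Ropp, <- exp_plus. f_equal. ring. }
  rewrite Hx.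
  assert (0 < exp (- (L * b))) by apply exp_pos.
  apply Rmult_le_reg_r with (exp (- (L * b))); auto.
  field_simplify; lra.
Qed.

Lemma sup_on_spec a b F M : a < b -> (forall t, a < t < b -> 0 <= F t <= M) ->
  (forall t, a < t < b -> F t <= sup_on a b F) /\ 0 <= sup_on a b F <= M.
Proof.
  intros Hab HF. unfold sup_on.
  destruct (Lub_Rbar_correct (fun x => exists t, a < t < b /\ x = F t)) as [Hub Hl].
  assert (Hm : Rbar_le (Lub_Rbar (fun x => exists t, a < t < b /\ x = F t)) M).
  { apply Hl. intros x [t [Ht ->]]. simpl. apply HF; auto. }
  assert (Hmid : Rbar_le (F ((a + b) / 2)) (Lub_Rbar (fun x => exists t, a < t < b /\ x = F t))).
  { apply Hub. exists ((a+b)/2). split; [lra|auto]. }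
  assert (Hm0 : 0 <= F ((a + b) / 2)) by (apply HF; lra).
  destruct (Lub_Rbar (fun x => exists t, a < t < b /\ x = F t)) as [l| |]; simpl in *; try contradiction.
  split.
  - intros t Ht. specialize (Hub (F t)). simpl in Hub. apply Hub. exists t; auto.
  - lra.
Qed.

Lemma Cmod_rev a b : Rabs (Cmod a - Cmod b) <= Cmod (a - b).
Proof.
  assert (H1 : Cmod a <= Cmod (a - b) + Cmod b).
  { replace a with ((a - b) + b)%C at 1 by ring. apply Cmod_triangle. }
  assert (H2 : Cmod b <= Cmod (a - b) + Cmod a).
  { replace b with (- (a - b) + a)%C at 1 by ring. rewrite <- (Cmod_opp (a - b)). apply Cmod_triangle. }
  unfold Rabs; destruct Rcase_abs; lra.
Qed.

Lemma powdiff (Q x y : R) (n : nat) : 0 <= Q -> 0 <= x <= Q -> 0 <= y <= Q ->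
  Rabs (x ^ n - y ^ n) <= INR n * (Q + 1) ^ n * Rabs (x - y).
Proof.
  intros HQ Hx Hy. induction n as [|n IH].
  - simpl. rewrite Rminus_diag, Rabs_R0. lra.
  - replace (x ^ S n - y ^ S n) with (x * (x ^ n - y ^ n) + y ^ n * (x - y)) by (simpl; ring).
    eapply Rle_trans. apply Rabs_triang. rewrite !Rabs_mult.
    assert (Hyn : 0 <= y ^ n <= (Q + 1) ^ n).
    { split. apply pow_le; lra. apply pow_incr; lra. }
    rewrite (Rabs_right x) by lra. rewrite (Rabs_right (y ^ n)) by lra.
    assert (H1 : 1 <= Q + 1) by lra.
    assert (Hq : 1 <= (Q + 1) ^ n) by (apply pow_R1_Rle; lra).
    assert (0 <= Rabs (x - y)) by apply Rabs_pos.
    assert (0 <= Rabs (x ^ n - y ^ n)) by apply Rabs_pos.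
    rewrite S_INR. simpl.
    assert (0 <= INR n) by apply pos_INR.
    assert (x * Rabs (x ^ n - y ^ n) <= (Q + 1) * (INR n * (Q + 1) ^ n * Rabs (x - y))).
    { apply Rmult_le_compat; lra. }
    assert (y ^ n * Rabs (x - y) <= (Q + 1) * (Q + 1) ^ n * Rabs (x - y)).
    { apply Rmult_le_compat_r; auto. nra. }
    nra.
Qed.

Definition Lf (lam : R) (p : nat) (R0 : R) : R :=
  Rabs lam * ((R0 ^ 2) ^ p + INR p * (R0 ^ 2 + 1) ^ p * 2 * R0 * R0) + 1.

Lemma Lf_pos lam p R0 : 0 <= R0 -> 0 < Lf lam p R0.
Proof.
  intros. unfold Lf. assert (0 <= Rabs lam) by apply Rabs_pos.
  assert (0 <= (R0 ^ 2) ^ p) by (apply pow_le; nra).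
  assert (0 <= (R0 ^ 2 + 1) ^ p) by (apply pow_le; nra).
  assert (0 <= INR p) by apply pos_INR. 
  assert (0 <= INR p * (R0 ^ 2 + 1) ^ p * 2 * R0 * R0).
  { repeat apply Rmult_le_pos; lra. }
  nra.
Qed.

Lemma ffun_lip lam p R0 a b : 0 <= R0 -> Cmod a <= R0 -> Cmod b <= R0 ->
  Cmod (ffun lam p a - ffun lam p b) <= Lf lam p R0 * Cmod (a - b).
Proof.
  intros HR Ha Hb. unfold ffun, gfun.
  set (ra := Cmod a ^ 2). set (rb := Cmod b ^ 2).
  replace (RtoC (lam * ra ^ p) * a - RtoC (lam * rb ^ p) * b)%C with
    (RtoC (lam * ra ^ p) * (a - b) + RtoC (lam * (ra ^ p - rb ^ p)) * b)%C.
  2: { apply injective_projections; simpl; ring. }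
  eapply Rle_trans. apply Cmod_triangle. rewrite !Cmod_mult, !Cmod_R, !Rabs_mult.
  assert (Ha0 : 0 <= Cmod a) by apply Cmod_ge_0.
  assert (Hb0 : 0 <= Cmod b) by apply Cmod_ge_0.
  assert (Hab : 0 <= Cmod (a - b)) by apply Cmod_ge_0.
  assert (Hra : 0 <= ra <= R0 ^ 2) by (unfold ra; split; [nra| apply pow_incr; lra]).
  assert (Hrb : 0 <= rb <= R0 ^ 2) by (unfold rb; split; [nra| apply pow_incr; lra]).
  assert (H1 : Rabs (ra ^ p) <= (R0 ^ 2) ^ p).
  { rewrite Rabs_right. apply pow_incr; lra. apply Rle_ge, pow_le; lra. }
  assert (H2 : Rabs (ra ^ p - rb ^ p) <= INR p * (R0 ^ 2 + 1) ^ p * Rabs (ra - rb)).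
  { apply powdiff; nra. }
  assert (H3 : Rabs (ra - rb) <= 2 * R0 * Cmod (a - b)).
  { unfold ra, rb. replace (Cmod a ^ 2 - Cmod b ^ 2) with ((Cmod a + Cmod b) * (Cmod a - Cmod b)) by ring.
    rewrite Rabs_mult. rewrite (Rabs_right (Cmod a + Cmod b)) by lra.
    pose proof (Cmod_rev a b). apply Rmult_le_compat; try lra; apply Rabs_pos. }
  assert (Hl : 0 <= Rabs lam) by apply Rabs_pos.
  assert (HP : 0 <= INR p * (R0 ^ 2 + 1) ^ p).
  { apply Rmult_le_pos. apply pos_INR. apply pow_le; nra. }
  assert (H4 : Rabs (ra ^ p - rb ^ p) * Cmod b <= INR p * (R0 ^ 2 + 1) ^ p * (2 * R0 * Cmod (a - b)) * R0).
  { apply Rmult_le_compat; try apply Rabs_pos; try lra.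
    eapply Rle_trans. exact H2. apply Rmult_le_compat_l; auto. }
  unfold Lf.
  assert (H5 : Rabs lam * Rabs (ra ^ p) * Cmod (a - b) <= Rabs lam * (R0 ^ 2) ^ p * Cmod (a - b)).
  { apply Rmult_le_compat_r; auto. apply Rmult_le_compat_l; auto. }
  assert (H6 : Rabs lam * Rabs (ra ^ p - rb ^ p) * Cmod b <= Rabs lam * (INR p * (R0 ^ 2 + 1) ^ p * (2 * R0 * Cmod (a - b)) * R0)).
  { rewrite Rmult_assoc. apply Rmult_le_compat_l; auto. }
  nra.
Qed.

Lemma ffun_bound lam p K a : Rabs (gfun lam p (Cmod a ^ 2)) <= K ->
  Cmod (ffun lam p a) <= K * Cmod a.
Proof.
  intros H. unfold ffun. rewrite Cmod_mult, Cmod_R.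
  apply Rmult_le_compat_r; auto. apply Cmod_ge_0.
Qed.

Lemma within_eps (F : R -> R) (D : R -> Prop) m e : 0 < e ->
  filterlim F (within D (locally m)) (locally (F m)) ->
  exists d, 0 < d /\ forall y, Rabs (y - m) < d -> D y -> Rabs (F y - F m) < e.
Proof.
  intros He H.
  assert (HB : locally (F m) (ball (F m) (mkposreal e He))) by apply locally_ball.
  specialize (H _ HB). destruct H as [d Hd].
  exists d. split. apply cond_pos. intros y Hy HD.
  specialize (Hd y). unfold ball in Hd; simpl in Hd. unfold AbsRing_ball, abs, minus, plus, opp in Hd; simpl in Hd.
  unfold Rminus. apply Hd; auto.
Qed.

Lemma boot (F : R -> R) (a b B B' : R) :
  a <= b -> B' < B -> F a <= B ->
  (forall t, a <= t <= b -> filterlim F (within (fun s => a <= s <= b) (locally t)) (locally (F t))) ->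
  (forall s, a <= s <= b -> (forall u, a <= u <= s -> F u <= B) -> forall u, a <= u <= s -> F u <= B') ->
  forall u, a <= u <= b -> F u <= B'.
Proof.
  intros Hab HB Ha Hc Hp.
  set (S := fun x => a <= x <= b /\ forall u, a <= u <= x -> F u <= B).
  assert (HSa : S a).
  { split. lra. intros u Hu. replace u with a by lra. auto. }
  destruct (completeness S) as [m [Hub Hl]].
  { exists b. intros x [Hx _]. lra. }
  { exists a. auto. }
  assert (Ham : a <= m) by (apply Hub; auto).
  assert (Hmb : m <= b) by (apply Hl; intros x [Hx _]; lra).
  assert (St1 : forall u, a <= u < m -> F u <= B).
  { intros u Hu. destruct (classic (exists x, S x /\ u < x)) as [[x [[Hx1 Hx2] Hx3]]|Hn].
    - apply Hx2. lra.
    - exfalso. assert (m <= u). { apply Hl. intros x Hx. apply Rnot_lt_le. intro. apply Hn. eauto. }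
      lra. }
  assert (St2 : F m <= B).
  { destruct (Req_dec m a) as [->|Hne]; auto.
    apply Rnot_lt_le. intro Hlt.
    destruct (within_eps F _ m (F m - B) ltac:(lra) (Hc m ltac:(lra))) as [d [Hd Hd2]].
    set (y := Rmax a (m - d / 2)).
    assert (Hy : a <= y < m /\ Rabs (y - m) < d).
    { unfold y, Rmax. destruct Rle_dec; split; try split; try lra;
      unfold Rabs; destruct Rcase_abs; lra. }
    specialize (Hd2 y (proj2 Hy) ltac:(lra)). specialize (St1 y (proj1 Hy)).
    unfold Rabs in Hd2; destruct Rcase_abs in Hd2; lra. }
  assert (HSm : forall u, a <= u <= m -> F u <= B).
  { intros u Hu. destruct (Req_dec u m) as [->|]; auto. apply St1; lra. }
  pose proof (Hp m ltac:(lra) HSm) as Hm.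
  destruct (Req_dec m b) as [->|Hne].
  { exact Hm. }
  exfalso.
  destruct (within_eps F _ m (B - B') ltac:(lra) (Hc m ltac:(lra))) as [d [Hd Hd2]].
  set (m' := Rmin b (m + d / 2)).
  assert (Hm' : m < m' <= b /\ Rabs (m' - m) < d).
  { unfold m', Rmin. destruct Rle_dec; split; try split; try lra;
      unfold Rabs; destruct Rcase_abs; lra. }
  assert (S m').
  { split. lra. intros u Hu. destruct (Rle_dec u m).
    - assert (F u <= B') by (apply Hm; lra). lra.
    - assert (Hm1 : F m <= B') by (apply Hm; lra).
      assert (Rabs (u - m) < d).
      { destruct Hm' as [_ Hm2]. rewrite Rabs_right in Hm2 by lra. rewrite Rabs_right by lra. lra. }
      specialize (Hd2 u H ltac:(lra)). unfold Rabs in Hd2; destruct Rcase_abs in Hd2; lra. }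
  assert (m' <= m) by (apply Hub; auto). lra.
Qed.

Lemma diff_deriv (f g : R -> C) x df dg : is_derive f x df -> is_derive g x dg ->
  is_derive (fun s => f s - g s)%C x (df - dg)%C.
Proof. intros Hf Hg. exact (is_derive_minus (V:=C_R_NormedModule) f g x df dg Hf Hg). Qed.

Lemma diff_lim (F : (R -> Prop) -> Prop) (FF : Filter F) (f g : R -> C) a b :
  filterlim f F (locally a) -> filterlim g F (locally b) ->
  filterlim (fun s => f s - g s)%C F (locally (a - b)%C).
Proof.
  intros Hf Hg.
  assert (Hg' : filterlim (fun s => opp (g s) : C_R_NormedModule) F (locally (opp (b : C_R_NormedModule)))).
  { eapply filterlim_comp. exact Hg. apply (filterlim_opp (K:=R_AbsRing) (V:=C_R_NormedModule)). }
  apply (filterlim_comp_2 (F:=F) f (fun s => opp (g s) : C_R_NormedModule) (fun x y => plus (x : C_R_NormedModule) y) Hf Hg').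
  apply (filterlim_plus (K:=R_AbsRing) (V:=C_R_NormedModule) a (opp b)).
Qed.

Lemma within_restrict (f : R -> C) (D1 D2 : R -> Prop) t l :
  (forall x, D2 x -> D1 x) ->
  filterlim f (within D1 (locally t)) l -> filterlim f (within D2 (locally t)) l.
Proof.
  intros HD H P HP. specialize (H P HP). unfold filtermap, within in *.
  eapply filter_imp. 2: exact H. intros x Hx H2. apply Hx, HD, H2.
Qed.

Lemma shift_sol eps alpha lam p T y dy ddy a0 b0 tn tau :
  is_sol eps alpha lam p 0 T y dy ddy a0 b0 -> 0 <= tn -> tn + tau <= T ->
  (forall s, 0 < s < tau ->
     is_derive (fun s => y (tn + s)) s (dy (tn + s)) /\
     is_derive (fun s => dy (tn + s)) s (ddy (tn + s)) /\
     (RtoC (eps ^ 2) * ddy (tn + s)%R + RtoC (alpha + / eps ^ 2) * y (tn + s)%R + ffun lam p (y (tn + s)%R))%C = RtoC 0) /\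
  (forall s, 0 <= s <= tau ->
     filterlim (fun s => y (tn + s)) (within (fun r => 0 <= r <= tau) (locally s)) (locally (y (tn + s))) /\
     filterlim (fun s => dy (tn + s)) (within (fun r => 0 <= r <= tau) (locally s)) (locally (dy (tn + s)))).
Proof.
  intros [_ [_ [Hd Hc]]] Htn HT.
  assert (Hg : forall s, is_derive (fun s => tn + s) s 1).
  { intro s. auto_derive; auto. }
  assert (Esc : forall d : C_R_NormedModule, scal (1:R) d = d) by (intro d; apply (scal_one (K:=R_AbsRing))).
  split.
  - intros s Hs. destruct (Hd (tn + s) ltac:(lra)) as [H1 [H2 H3]].
    split; [|split]; auto.
    + pose proof (is_derive_comp y (fun s => tn + s) s _ _ H1 (Hg s)) as H.
      rewrite Esc in H. exact H.
    + pose proof (is_derive_comp dy (fun s => tn + s) s _ _ H2 (Hg s)) as H.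
      rewrite Esc in H. exact H.
  - intros s Hs. destruct (Hc (tn + s) ltac:(lra)) as [H1 H2].
    assert (Hsh : filterlim (fun s => tn + s) (within (fun r => 0 <= r <= tau) (locally s))
                    (within (fun s => 0 <= s <= T) (locally (tn + s)))).
    { intros P [d Hdd]. exists d. intros z Hz Hzin. apply Hdd.
      - unfold ball in *; simpl in *. unfold AbsRing_ball, abs, minus, plus, opp in *; simpl in *.
        replace (tn + z + - (tn + s)) with (z + - s) by ring. exact Hz.
      - lra. }
    split; eapply filterlim_comp; eauto.
Qed.

Lemma exp_mono x y : x <= y -> exp x <= exp y.
Proof. intros H. destruct (Rle_lt_or_eq_dec x y H) as [H'|H']. left; apply exp_increasing; auto. subst; lra. Qed.

Lemma exp_quarter : exp (1 / 4) <= 4 / 3.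
Proof.
  apply Rnot_lt_le. intro H.
  assert (H1 : exp (1 / 4) ^ 4 = exp 1).
  { simpl. rewrite Rmult_1_r, <- !exp_plus. f_equal. field. }
  pose proof exp_le_3. rewrite <- H1 in H0.
  set (x := exp (1/4)) in *.
  assert (H3 : x * x > 16 / 9) by nra.
  assert (H4 : (x * x) * (x * x) > 256 / 81) by nra.
  simpl in H0. nra.
Qed.

Lemma ode_rearr (X f : C) : (X + f = 0)%C -> Cmod X = Cmod f.
Proof.
  intro H. replace X with ((X + f) - f)%C by ring. rewrite H.
  replace (0 - f)%C with (- f)%C by ring. apply Cmod_opp.
Qed.

Lemma ode_diff (e c A1 A2 B1 B2 f1 f2 : C) :
  (e * A1 + c * B1 + f1 = 0)%C -> (e * A2 + c * B2 + f2 = 0)%C ->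
  Cmod (e * (A1 - A2) + c * (B1 - B2))%C = Cmod (f1 - f2)%C.
Proof.
  intros H1 H2.
  replace (e * (A1 - A2) + c * (B1 - B2))%C with ((e * A1 + c * B1 + f1) - (e * A2 + c * B2 + f2) - (f1 - f2))%C by ring.
  rewrite H1, H2. replace (0 - 0 - (f1 - f2))%C with (- (f1 - f2))%C by ring. apply Cmod_opp.
Qed.

Lemma lim_Cmod2 (F : (R -> Prop) -> Prop) (FF : Filter F) (u : R -> C) z :
  filterlim u F (locally z) -> filterlim (fun s => Cmod (u s) ^ 2) F (locally (Cmod z ^ 2)).
Proof.
  intro H. pose proof (limR_sq2 F FF _ _ _ _ (lim_fstC _ _ _ H) (lim_sndC _ _ _ H)) as H'.
  rewrite Cmod_sq. eapply filterlim_ext; [|exact H']. intro s. cbv beta. rewrite (Cmod_sq (u s)). reflexivity.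
Qed.

Theorem lemmaB3 :
  forall (alpha lam : R) (p : nat) (phi1 phi2 : C) (T M : R),
  0 <= alpha -> 0 < T ->
  exists Cst : R, 0 < Cst /\
  forall (eps : R) (y dy ddy : R -> C),
    0 < eps <= 1 ->
    is_sol eps alpha lam p 0 T y dy ddy phi1 (phi2 / RtoC (eps ^ 2))%C ->
    (forall t, 0 < t < T ->
       Cmod (y t) <= M /\ Cmod (dy t) <= M / eps ^ 2 /\ Cmod (ddy t) <= M / eps ^ 4) ->
    forall (tau : R) (n : nat),
      0 < tau -> (INR n + 1) * tau <= T ->
      let C0 := C0def eps T y dy ddy in
      tau * ((2 * C0 + 4) * K1def lam p C0) <= 1 ->
      let yn := fst (mti_iter eps alpha lam p tau phi1 phi2 n) in
      let dyn := snd (mti_iter eps alpha lam p tau phi1 phi2 n) in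
      Cmod yn <= C0 + 1 -> Cmod dyn <= (C0 + 1) / eps ^ 2 ->
      forall yt dyt ddyt : R -> C,
        is_sol eps alpha lam p 0 tau yt dyt ddyt yn dyn ->
        let tn := INR n * tau in
        let en := (y tn - yn)%C in
        let den := (dy tn - dyn)%C in
        Energy eps alpha (y (tn + tau)%R - yt tau)%C (dy (tn + tau)%R - dyt tau)%C
          - Energy eps alpha en den
        <= Cst * tau * Energy eps alpha en den.
Proof.
  intros alpha lam p phi1 phi2 T M Ha HT.
  set (Mp := Rabs M). set (R0 := 2 * Mp + 4).
  assert (HR0 : 0 <= R0) by (unfold R0, Mp; pose proof (Rabs_pos M); lra).
  set (L := Lf lam p R0).
  assert (HL : 0 < L) by (apply Lf_pos; auto).
  assert (HeLT : 0 < exp (L * T)) by apply exp_pos.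
  exists (L * exp (L * T) + 1). split. { nra. }
  intros eps y dy ddy Heps Hsol Hbd tau n Htau HnT C0 Htau1 yn dyn Hyn Hdyn yt dyt ddyt Hsolt tn en den.
  assert (HM0 : 0 <= M).
  { destruct (Hbd (T / 2) ltac:(lra)) as [H _]. pose proof (Cmod_ge_0 (y (T / 2))). lra. }
  assert (HMp : Mp = M) by (unfold Mp; apply Rabs_right; lra).
  assert (He2 : 0 < eps ^ 2) by (apply pow_lt; lra).
  assert (He4 : 0 < eps ^ 4) by (apply pow_lt; lra).
  destruct (sup_on_spec 0 T (fun t => Cmod (y t)) M HT) as [_ [S1a S1b]].
  { intros t Ht. split. apply Cmod_ge_0. apply Hbd; auto. }
  destruct (sup_on_spec 0 T (fun t => Cmod (dy t)) (M / eps ^ 2) HT) as [_ [S2a S2b]].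
  { intros t Ht. split. apply Cmod_ge_0. apply Hbd; auto. }
  destruct (sup_on_spec 0 T (fun t => Cmod (ddy t)) (M / eps ^ 4) HT) as [_ [S3a S3b]].
  { intros t Ht. split. apply Cmod_ge_0. apply Hbd; auto. }
  assert (HC0 : 0 <= C0 <= M).
  { unfold C0, C0def. split.
    - eapply Rle_trans. 2: apply Rmax_l. exact S1a.
    - apply Rmax_lub. exact S1b. apply Rmax_lub.
      + apply Rmult_le_compat_l with (r := eps ^ 2) in S2b; [|lra].
        replace (eps ^ 2 * (M / eps ^ 2)) with M in S2b by (field; lra). exact S2b.
      + apply Rmult_le_compat_l with (r := eps ^ 4) in S3b; [|lra].
        replace (eps ^ 4 * (M / eps ^ 4)) with M in S3b by (field; lra). exact S3b. }
  set (Rb := 2 * C0 + 4).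
  assert (HRb : 4 <= Rb) by (unfold Rb; lra).
  assert (HRb2 : 0 < Rb ^ 2) by nra.
  destruct (sup_on_spec 0 (Rb ^ 2) (fun rho => Rabs (gfun lam p rho)) (Rabs lam * (Rb ^ 2) ^ p) HRb2) as [SK1 [SK2 _]].
  { intros t Ht. split. apply Rabs_pos. unfold gfun. rewrite Rabs_mult.
    apply Rmult_le_compat_l. apply Rabs_pos. rewrite Rabs_right. apply pow_incr; lra.
    apply Rle_ge, pow_le; lra. }
  fold (K1def lam p C0) in SK1, SK2.
  set (K1 := K1def lam p C0) in *.
  assert (HK : forall rho, 0 <= rho < Rb ^ 2 -> Rabs (gfun lam p rho) <= K1).
  { intros rho Hr. set (rho' := (rho + Rb ^ 2) / 2).
    eapply Rle_trans. 2: apply (SK1 rho'); unfold rho'; lra.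
    unfold gfun. rewrite !Rabs_mult. apply Rmult_le_compat_l. apply Rabs_pos.
    rewrite !Rabs_right. apply pow_incr; unfold rho'; lra.
    apply Rle_ge, pow_le; unfold rho'; lra. apply Rle_ge, pow_le; lra. }
  assert (HKt : K1 * tau <= 1 / 4).
  { assert (tau * (Rb * K1) <= 1) by exact Htau1. 
    apply Rmult_le_reg_l with 4. lra. nra. }
  assert (Hn0 : 0 <= INR n) by apply pos_INR.
  assert (Htn0 : 0 <= tn) by (unfold tn; nra).
  assert (Htn1 : tn + tau <= T) by (unfold tn; nra).
  set (c := alpha + / eps ^ 2).
  assert (Hc : / eps ^ 2 <= c) by (unfold c; lra).
  assert (Hc0 : 0 < c) by (pose proof (Rinv_0_lt_compat _ He2); lra).
  destruct Hsolt as [Hyt0 [Hdyt0 [Hdt Hct]]].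
  assert (HE0 : Energy eps alpha yn dyn <= 2 * c * (C0 + 1) ^ 2).
  { unfold Energy. fold c.
    assert (H1 : Cmod dyn ^ 2 <= ((C0 + 1) / eps ^ 2) ^ 2) by (apply pow_incr; split; [apply Cmod_ge_0|auto]).
    assert (H2 : Cmod yn ^ 2 <= (C0 + 1) ^ 2) by (apply pow_incr; split; [apply Cmod_ge_0|auto]).
    assert (H3 : eps ^ 2 * ((C0 + 1) / eps ^ 2) ^ 2 = (C0 + 1) ^ 2 * / eps ^ 2) by (field; lra).
    assert (H4 : eps ^ 2 * Cmod dyn ^ 2 <= (C0 + 1) ^ 2 * / eps ^ 2).
    { rewrite <- H3. apply Rmult_le_compat_l; lra. }
    assert (H5 : (C0 + 1) ^ 2 * / eps ^ 2 <= (C0 + 1) ^ 2 * c).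
    { apply Rmult_le_compat_l; nra. }
    nra. }
  pose proof exp_quarter as Hq.
  assert (HK10 : 0 <= K1) by exact SK2.
  assert (Hboot : forall u, 0 <= u <= tau -> Cmod (yt u) ^ 2 <= 8 / 3 * (C0 + 1) ^ 2).
  { apply (boot (fun s => Cmod (yt s) ^ 2) 0 tau (3 * (C0 + 1) ^ 2)); try lra.
    - nra.
    - rewrite Hyt0. assert (Cmod yn ^ 2 <= (C0 + 1) ^ 2) by (apply pow_incr; split; [apply Cmod_ge_0|auto]). nra.
    - intros t Ht. apply lim_Cmod2. apply within_filter, locally_filter. apply (Hct t Ht).
    - intros s Hs Hgood u Hu.
      assert (HG := GL eps alpha K1 0 u yt dyt ddyt ltac:(lra) Ha HK10 ltac:(lra)).
      assert (HGu : Energy eps alpha (yt u) (dyt u) <= exp (K1 * (u - 0)) * Energy eps alpha (yt 0) (dyt 0)).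
      { apply HG.
        - intros t Ht. destruct (Hdt t ltac:(lra)) as [H1 [H2 H3]]. split; auto. split; auto.
          apply ode_rearr in H3. rewrite H3. apply ffun_bound. apply HK.
          split. apply pow2_ge_0. assert (Cmod (yt t) ^ 2 <= 3 * (C0 + 1) ^ 2) by (apply Hgood; lra).
          unfold Rb. nra.
        - intros t Ht. destruct (Hct t ltac:(lra)) as [H1 H2].
          split; eapply within_restrict; try eassumption; intros x Hx; simpl; lra. }
      rewrite Hyt0, Hdyt0 in HGu.
      assert (Hex : exp (K1 * (u - 0)) <= 4 / 3).
      { eapply Rle_trans. 2: exact Hq. apply exp_mono. nra. }
      assert (HEn : 0 <= Energy eps alpha yn dyn).
      { unfold Energy. fold c. pose proof (pow2_ge_0 (Cmod dyn)). pose proof (pow2_ge_0 (Cmod yn)). nra. }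
      assert (HEu : c * Cmod (yt u) ^ 2 <= Energy eps alpha (yt u) (dyt u)).
      { unfold Energy. fold c. pose proof (pow2_ge_0 (Cmod (dyt u))). nra. }
      assert (c * Cmod (yt u) ^ 2 <= c * (8 / 3 * (C0 + 1) ^ 2)).
      { assert (exp (K1 * (u - 0)) * Energy eps alpha yn dyn <= 4 / 3 * (2 * c * (C0 + 1) ^ 2)).
        { apply Rmult_le_compat; auto. left; apply exp_pos. }
        lra. }
      apply Rmult_le_reg_l with c; auto. }
  assert (Hytb : forall u, 0 <= u <= tau -> Cmod (yt u) <= R0).
  { intros u Hu. specialize (Hboot u Hu). pose proof (Cmod_ge_0 (yt u)).
    assert (8 / 3 * (C0 + 1) ^ 2 <= R0 ^ 2) by (unfold R0; rewrite HMp; nra).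
    nra. }
  destruct (shift_sol eps alpha lam p T y dy ddy phi1 (phi2 / RtoC (eps ^ 2))%C tn tau Hsol Htn0 Htn1) as [Hsd Hsc].
  assert (HG := GL eps alpha L 0 tau (fun s => y (tn + s)%R - yt s)%C (fun s => dy (tn + s)%R - dyt s)%C
                   (fun s => ddy (tn + s)%R - ddyt s)%C ltac:(lra) Ha ltac:(lra) ltac:(lra)).
  assert (HGt : Energy eps alpha (y (tn + tau)%R - yt tau)%C (dy (tn + tau)%R - dyt tau)%C <=
                exp (L * (tau - 0)) * Energy eps alpha (y (tn + 0)%R - yt 0)%C (dy (tn + 0)%R - dyt 0)%C).
  { apply HG.
    - intros t Ht. destruct (Hsd t Ht) as [H1 [H2 H3]]. destruct (Hdt t Ht) as [H4 [H5 H6]].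
      split; [|split].
      + apply diff_deriv; auto.
      + apply diff_deriv; auto.
      + rewrite (ode_diff _ _ _ _ _ _ _ _ H3 H6). apply ffun_lip; auto.
        * destruct (Hbd (tn + t) ltac:(lra)) as [Hy _]. unfold R0. rewrite HMp. lra.
        * apply Hytb. lra.
    - intros t Ht. destruct (Hsc t Ht) as [H1 H2]. destruct (Hct t Ht) as [H4 H5].
      assert (FW : Filter (within (fun s => 0 <= s <= tau) (locally t))) by (apply within_filter, locally_filter).
      split; apply (diff_lim _ FW); auto. }
  rewrite Rplus_0_r, Hyt0, Hdyt0 in HGt. fold en den in HGt.
  rewrite Rminus_0_r in HGt.
  assert (HE0n : 0 <= Energy eps alpha en den).
  { unfold Energy. fold c. pose proof (pow2_ge_0 (Cmod den)). pose proof (pow2_ge_0 (Cmod en)). nra. }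
  assert (Hx1 : exp (L * tau) - 1 <= L * tau * exp (L * tau)).
  { pose proof (exp_ineq1_le (- (L * tau))).
    assert (exp (- (L * tau)) * exp (L * tau) = 1) by (rewrite <- exp_plus; replace (- (L * tau) + L * tau) with 0 by ring; apply exp_0).
    pose proof (exp_pos (L * tau)). nra. }
  assert (Hx2 : exp (L * tau) <= exp (L * T)) by (apply exp_mono; nra).
  assert (Hx3 : L * tau * exp (L * tau) <= L * exp (L * T) * tau).
  { replace (L * exp (L * T) * tau) with ((L * tau) * exp (L * T)) by ring. apply Rmult_le_compat_l; nra. }
  assert (Hfin : exp (L * tau) - 1 <= (L * exp (L * T) + 1) * tau) by lra.
  assert ((exp (L * tau) - 1) * Energy eps alpha en den <= (L * exp (L * T) + 1) * tau * Energy eps alpha en den).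
  { apply Rmult_le_compat_r; auto. }
  lra.
Qed.
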